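(* Let $r\ge1$, $n$ be integers and let $\sigma:\mathbb{Z}_n\to\{0,1\}$ be a temporally periodic configuration in which every maximal homogeneous block has length at most $r$. Then $\sigma$ is balanced, i.e. $|\{i:\sigma(i)=0\}|=|\{i:\sigma(i)=1\}|$.
   Context: Cells are elements of $\mathbb{Z}_n$, arithmetic mod $n$; $[a,b]$ denotes the cyclic interval $a,\dots,b$. The majority rule with radius $r$: $\mathrm{maj}_r(\sigma)(i)=0$ if among the cells of $[i-r,i+r]$ strictly more have value $0$ than $1$ under $\sigma$, and $=1$ otherwise. $\sigma$ is temporally periodic if $\mathrm{maj}_r(\mathrm{maj}_r(\sigma))=\sigma$. A maximal homogeneous block of $\sigma$ with value $\beta$ is a cell interval $[i,j]$ with $\sigma(k)=\beta$ for all $k\in[i,j]$ and $\sigma(i-1)=\sigma(j+1)=1-\beta$. *)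

(* Defs.v *)
From mathcomp Require Import all_boot all_order all_algebra.
Set Implicit Arguments. Unset Strict Implicit. Unset Printing Implicit Defensive.
Import GRing.Theory.
Local Open Scope ring_scope.

(* Configurations: sigma : 'Z_n -> bool, with false = 0 and true = 1.
   'Z_n is the ring Z/nZ (faithful for n >= 2). *)

Definition window (n r : nat) (i : 'Z_n) : seq 'Z_n :=
  [seq i - r%:R + k%:R | k <- iota 0 (r.*2.+1)].

Definition zeros_in (n r : nat) (s : 'Z_n -> bool) (i : 'Z_n) : nat :=
  count (fun j => ~~ s j) (window r i).
Definition ones_in (n r : nat) (s : 'Z_n -> bool) (i : 'Z_n) : nat :=
  count (fun j => s j) (window r i).

Definition maj (n r : nat) (s : 'Z_n -> bool) : 'Z_n -> bool :=
  fun i => ~~ (ones_in r s i < zeros_in r s i)%N.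

Definition temporally_periodic (n r : nat) (s : 'Z_n -> bool) : Prop :=
  forall i, maj r (maj r s) i = s i.

(* The cyclic interval [i, i + L - 1] (1 <= L <= n) is a maximal homogeneous
   block of value b: all its cells have value b, and either it is the whole
   ring (L = n), or the neighbouring cells i-1 and i+L have value 1-b. *)
Definition max_hom_block (n : nat) (s : 'Z_n -> bool) (i : 'Z_n) (L : nat)
    (b : bool) : Prop :=
  [/\ (0 < L)%N, (L <= n)%N,
      (forall k : nat, (k < L)%N -> s (i + k%:R) = b)
    & L = n \/ (s (i - 1) = ~~ b /\ s (i + L%:R) = ~~ b)].

Definition balanced (n : nat) (s : 'Z_n -> bool) : Prop :=
  #|[pred i | ~~ s i]| = #|[pred i | s i]|.

(* Main.v *)
Require Import Defs.
Set Warnings "-notation-overridden -ambiguous-paths -notation-incompatible-prefix".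
From mathcomp Require Import all_boot all_order all_algebra zify ring.
Import GRing.Theory Num.Theory.
Set Implicit Arguments. Unset Strict Implicit. Unset Printing Implicit Defensive.
Definition sg (b : bool) : int := if b then 1%R else (-1)%R.
Definition PS (h : nat -> bool) (k : nat) : int := (\sum_(j < k) sg (h j))%R.
Definition bd (h : nat -> bool) j := h j != h j.+1.

Lemma PS_split h u v : u <= v -> PS h v = (PS h u + \sum_(u <= j < v) sg (h j))%R.
Proof.
move=> uv; rewrite /PS -!(big_mkord xpredT (fun j => sg (h j))).
by rewrite (@big_cat_nat _ _ _ u) //=.
Qed.

Lemma sum_run h u v b : (forall j, u <= j < v -> h j = b) ->
  (\sum_(u <= j < v) sg (h j))%R = ((v - u)%:Z * sg b)%R.
Proof.
move=> H; rewrite big_nat_cond (eq_bigr (fun _ => sg b)); last first.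
  by move=> i /andP[/H -> _].
rewrite -big_nat_cond sumr_const_nat.
by rewrite -mulr_natl natz.
Qed.

Lemma sum_sg_nat h u m :
  (\sum_(u <= j < u + m) sg (h j))%R = (2 * (\sum_(k < m) h (u + k))%:Z - m%:Z)%R.
Proof.
elim: m => [|m IH]; first by rewrite addn0 big_geq // big_ord0.
rewrite addnS big_nat_recr ?leq_addr //= IH big_ord_recr /=.
case: (h (u + m)) => /=; rewrite /sg; lia.
Qed.
Section Per.
Variable n : nat.
Hypothesis n_gt0 : 0 < n.

Definition periodic (h : nat -> bool) := forall i, h (i + n) = h i.

Lemma per_mul h : periodic h -> forall i k, h (i + k * n) = h i.
Proof. move=> P i; elim=> [|k IH]; first by rewrite addn0. by rewrite mulSn addnA addnAC P IH. Qed.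

Lemma per_mod h : periodic h -> forall i, h i = h (i %% n).
Proof. move=> P i; by rewrite {1}(divn_eq i n) addnC (per_mul P). Qed.

Lemma per_eqmod h : periodic h -> forall i j, i %% n = j %% n -> h i = h j.
Proof. move=> P i j e; by rewrite (per_mod P i) e -per_mod. Qed.

Lemma bd_per h : periodic h -> periodic (bd h).
Proof. by move=> P i; rewrite /bd -addSn !P. Qed.

Lemma bd_exists h u v : u <= v -> h u != h v -> exists2 j, u <= j < v & bd h j.
Proof.
move=> uv; elim: v uv => [|v IH]; first by rewrite leqn0 => /eqP ->; rewrite eqxx.
rewrite leq_eqVlt => /orP[/eqP ->|]; first by rewrite eqxx.
rewrite ltnS => uv hn.
case: (boolP (h u != h v)) => [/(IH uv) [j /andP[j1 j2] bj]|].
  by exists j => //; rewrite j1 ltnS ltnW.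
rewrite negbK => /eqP e; exists v; first by rewrite uv ltnSn.
by rewrite /bd -e.
Qed.

Lemma const_run h u v : (forall k, u <= k < v -> ~~ bd h k) -> forall k, u <= k <= v -> h k = h u.
Proof.
move=> H k /andP[uk kv]; apply/eqP; apply: contraT => ne.
have ne' : h u != h k by rewrite eq_sym.
have [j /andP[j1 j2] bj] := bd_exists uk ne'.
by move: (H j); rewrite j1 (leq_trans j2 kv) bj => /(_ isT).
Qed.

Definition nxt (h : nat -> bool) (j : nat) : nat := j + find (fun d => bd h (j + d)) (iota 0 n).

Section NxtSpec.
Variable h : nat -> bool.
Hypothesis P : periodic h.
Hypothesis ex : exists j0, bd h j0.

Lemma has_bd j : has (fun d => bd h (j + d)) (iota 0 n).
Proof.
case: ex => j0 b0; apply/hasP; exists ((j0 + j * n - j) %% n).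
  by rewrite mem_iota add0n ltn_pmod.
have jle : j <= j0 + j * n by rewrite (leq_trans _ (leq_addl _ _)) // leq_pmulr.
rewrite -(per_mul (bd_per P) _ ((j0 + j * n - j) %/ n)).
by rewrite -addnA [X in j + X]addnC -divn_eq subnKC // per_mul //; apply bd_per.
Qed.

Lemma nxt_bd j : bd h (nxt h j).
Proof.
have hf := has_bd j; have := nth_find 0 hf; rewrite nth_iota ?add0n //.
by move: hf; rewrite has_find size_iota.
Qed.

Lemma nxt_ge j : j <= nxt h j. Proof. exact: leq_addr. Qed.

Lemma nxt_lt j : nxt h j < j + n.
Proof. by rewrite ltn_add2l; move: (has_bd j); rewrite has_find size_iota. Qed.

Lemma nxt_min j k : j <= k < nxt h j -> ~~ bd h k.
Proof.
move=> /andP[jk kn].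
have kjn : k - j < n by rewrite ltn_subLR // (ltn_trans kn (nxt_lt j)).
have := @before_find _ 0 (fun d => bd h (j + d)) (iota 0 n) (k - j).
rewrite ltn_subLR // => /(_ kn).
by rewrite nth_iota // add0n subnKC // => ->.
Qed.

Lemma nxt_first j k : j <= k -> bd h k -> nxt h j <= k.
Proof. move=> jk bk; rewrite leqNgt; apply/negP => lt; by move: (@nxt_min j k); rewrite jk lt bk => /(_ isT). Qed.

Lemma nxt_shift j k : nxt h (j + k * n) = nxt h j + k * n.
Proof.
rewrite /nxt -addnA [k * n + _]addnC addnA; congr (_ + _ + _).
apply: eq_find => d; by rewrite /= addnAC per_mul //; apply bd_per.
Qed.

Lemma nxt_lt2 u v : u <= v -> h u != h v -> nxt h u < v.
Proof.
move=> uv ne; rewrite ltnNge; apply/negP => vn.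
have H : forall k, u <= k < v -> ~~ bd h k.
  move=> k /andP[uk kv]; apply: (@nxt_min u k); rewrite uk /=; exact: leq_trans kv vn.
by move: ne; rewrite (const_run H (k:=v)) ?uv ?leqnn ?eqxx.
Qed.
End NxtSpec.
End Per.
Section BLsec.
Variables (r : nat) (f g : nat -> bool).
Hypothesis Hfg : forall j, g (j + r) = (r < \sum_(k < r.*2.+1) f (j + k)).

Lemma BL j : bd g (j + r) ->
  [/\ f j = g (j + r), f (j + r.*2.+1) = g (j + r).+1 & \sum_(k < r.*2) f (j.+1 + k) = r].
Proof.
set T := \sum_(k < r.*2) f (j.+1 + k).
have s1 : \sum_(k < r.*2.+1) f (j + k) = f j + T.
  rewrite big_ord_recl addn0; congr (_ + _); apply eq_bigr => i _.
  by rewrite lift0 addnS -addSn.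
have s2 : \sum_(k < r.*2.+1) f (j.+1 + k) = T + f (j + r.*2.+1).
  by rewrite big_ord_recr /= addSnnS.
have e1 := Hfg j; have e2 := Hfg j.+1.
rewrite addSn in e2; rewrite /bd e1 e2 s1 s2.
move: (f j) (f (j + r.*2.+1)) => [] [] /=;
case: (ltnP r (_ + T)) => h1; case: (ltnP r (T + _)) => h2 //= _; split => //; lia.
Qed.
End BLsec.
Ltac alia := repeat match goal with
 | H : forall _, _ |- _ => clear H
 | H : is_true (bd _ _) |- _ => clear H
 | H : @eq bool (?h _) _ |- _ => is_var h; clear H
 | H : exists _, _ |- _ => clear H
 | x := _ |- _ => clearbody x
 end; lia.

Lemma PS_bal r (f : nat -> bool) j : \sum_(k < r.*2) f (j.+1 + k) = r ->
  PS f (j + r.*2.+1) = PS f j.+1.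
Proof.
move=> H; rewrite -addSnnS (PS_split _ (leq_addr _ _)) sum_sg_nat H.
rewrite -muln2 PoszM; lia.
Qed.

Lemma nb_ne (b : bool) : ~~ b != b. Proof. by case: b. Qed.
Lemma b_nb (b : bool) : b = ~~ b -> False. Proof. by case: b. Qed.

Lemma sg_neg b : sg (~~ b) = (- sg b)%R. Proof. by case: b. Qed.

Lemma bool_ne (a b : bool) : a != b -> a = ~~ b. Proof. by case: a; case: b. Qed.

Definition NR (r : nat) (h : nat -> bool) := forall j, ~ (forall k, k <= r -> h (j + k) = h j).

Section Pair.
Variables (n r : nat) (f g : nat -> bool).
Hypothesis n_gt0 : 0 < n.
Hypotheses (perf : periodic n f) (perg : periodic n g).
Hypotheses (exf : exists j, bd f j) (exg : exists j, bd g j).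
Hypothesis Hfg : forall j, g (j + r) = (r < \sum_(k < r.*2.+1) f (j + k)).
Hypothesis Hgf : forall j, f (j + r) = (r < \sum_(k < r.*2.+1) g (j + k)).

Lemma const_val (h : nat -> bool) u v b : (forall k, u <= k < v -> ~~ bd h k) -> h u = b ->
  forall k, u <= k <= v -> h k = b.
Proof. move=> H hu k hk; by rewrite (const_run H hk). Qed.

Lemma PB A : r.*2 <= A -> bd g A ->
  let b := nxt n g A.+1 in let p := nxt n f (A - r) in let p' := nxt n f (A + r.+1) in
  [/\ p + p' = A + b, (PS f p'.+1 - PS f p.+1 = PS g b.+1 - PS g A.+1)%R,
      A - r <= p, p.+1 + r <= b & A + r.+1 <= p' <= b + r] /\
  (NR r f -> p < A) /\ (NR r g -> b <= A + r).
Proof.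
move=> rA bA b p p'.
set be := g A.+1.
have gA : g A = ~~ be by apply: bool_ne.
have Ab : A < b := nxt_ge _ _ _.
have bb : bd g b := nxt_bd n_gt0 perg exg _.
have gconst : forall k, A.+1 <= k <= b -> g k = be.
  apply: const_val => // k hk; exact: (nxt_min n_gt0 perg exg hk).
have gb : g b = be by apply: gconst; rewrite Ab leqnn.
have gb1 : g b.+1 = ~~ be by rewrite -gb; apply: bool_ne; rewrite eq_sym.
have [fA fA' balA] : [/\ f (A - r) = g (A - r + r), f (A - r + r.*2.+1) = g (A - r + r).+1
                        & \sum_(k < r.*2) f ((A - r).+1 + k) = r].
  apply: (BL Hfg); rewrite subnK //; alia.
rewrite subnK in fA fA'; last alia.
have e1 : A - r + r.*2.+1 = A + r.+1 by alia.
rewrite e1 gA in fA' fA.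
have [fb fb' balb] : [/\ f (b - r) = g (b - r + r), f (b - r + r.*2.+1) = g (b - r + r).+1
                        & \sum_(k < r.*2) f ((b - r).+1 + k) = r].
  apply: (BL Hfg); rewrite subnK //; alia.
rewrite subnK in fb fb'; last alia.
have e2 : b - r + r.*2.+1 = b + r.+1 by alia.
rewrite e2 gb gb1 in fb' fb.
have BLf : forall k, r <= k -> bd f k -> g (k - r) = f k /\ g (k + r.+1) = f k.+1.
  move=> k rk bk.
  have [h1 h2 _] : [/\ g (k - r) = f (k - r + r), g (k - r + r.*2.+1) = f (k - r + r).+1
                        & \sum_(k0 < r.*2) g ((k - r).+1 + k0) = r].
    apply: (BL Hgf); rewrite subnK //.
  rewrite subnK // in h1 h2; split => //; rewrite -h2; congr g; alia.
have pA : A - r <= p := nxt_ge _ _ _.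
have pb : p < b - r.
  apply: (nxt_lt2 n_gt0 perf exf); first alia.
  by rewrite fA fb nb_ne.
have fp : forall k, A - r <= k <= p -> f k = ~~ be.
  apply: const_val => // k hk; exact: (nxt_min n_gt0 perf exf hk).
have bp : bd f p := nxt_bd n_gt0 perf exf _.
have fp1 : f p.+1 = be.
  have := bool_ne bp; rewrite fp ?pA ?leqnn //; by move=> /(congr1 negb); rewrite !negbK => ->.
have fbe : forall k, p.+1 <= k <= b - r -> f k = be.
  apply: const_val => // k /andP[k1 k2]; apply/negP => bk.
  set k0 := nxt n f p.+1.
  have k0le : k0 <= k := nxt_first n_gt0 perf exf k1 bk.
  have k0ge : p.+1 <= k0 := nxt_ge _ _ _.
  have fk0 : f k0 = be.
    apply: (const_val (u := p.+1) (v := k0)) => //; last by rewrite nxt_ge leqnn.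
    move=> k' hk'; exact: (nxt_min n_gt0 perf exf hk').
  have bk0 : bd f k0 := nxt_bd n_gt0 perf exf _.
  have [_ g2] := BLf k0 ltac:(alia) bk0.
  have fk01 : f k0.+1 = ~~ be by rewrite -fk0; apply: bool_ne; rewrite eq_sym.
  rewrite fk01 gconst in g2; first exact: (b_nb g2).
  alia.
have p'A : A + r.+1 <= p' := nxt_ge _ _ _.
have p'b : p' < b + r.+1.
  apply: (nxt_lt2 n_gt0 perf exf); first alia.
  by rewrite fA' fb' eq_sym nb_ne.
have fp' : forall k, A + r.+1 <= k <= p' -> f k = be.
  apply: const_val => // k hk; exact: (nxt_min n_gt0 perf exf hk).
have bp' : bd f p' := nxt_bd n_gt0 perf exf _.
have fp'1 : f p'.+1 = ~~ be.
  have := bool_ne bp'; rewrite fp' ?p'A ?leqnn //; by move=> ->; rewrite negbK.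
have fnbe : forall k, p'.+1 <= k <= b + r.+1 -> f k = ~~ be.
  apply: const_val => // k /andP[k1 k2]; apply/negP => bk.
  set k0 := nxt n f p'.+1.
  have k0le : k0 <= k := nxt_first n_gt0 perf exf k1 bk.
  have k0ge : p'.+1 <= k0 := nxt_ge _ _ _.
  have fk0 : f k0 = ~~ be.
    apply: (const_val (u := p'.+1) (v := k0)) => //; last by rewrite nxt_ge leqnn.
    move=> k' hk'; exact: (nxt_min n_gt0 perf exf hk').
  have bk0 : bd f k0 := nxt_bd n_gt0 perf exf _.
  have [g1 _] := BLf k0 ltac:(alia) bk0.
  rewrite fk0 gconst in g1; first exact: (b_nb g1).
  alia.
have E1 : PS f p'.+1 = (PS f (A + r.+1) + (p'.+1 - (A + r.+1))%:Z * sg be)%R.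
  rewrite (PS_split _ (_ : A + r.+1 <= p'.+1)); last alia.
  rewrite (sum_run (b := be)) // => k hk; apply: fp'; alia.
have E2 : PS f p.+1 = (PS f (A - r).+1 + (p.+1 - (A - r).+1)%:Z * sg (~~ be))%R.
  rewrite (PS_split _ (_ : (A - r).+1 <= p.+1)); last alia.
  rewrite (sum_run (b := ~~ be)) // => k hk; apply: fp; alia.
have E3 : PS f (A + r.+1) = PS f (A - r).+1 by rewrite -e1 PS_bal.
have E4 : PS f (b + r.+1) = (PS f p'.+1 + (b + r.+1 - p'.+1)%:Z * sg (~~ be))%R.
  rewrite (PS_split _ (_ : p'.+1 <= b + r.+1)); last alia.
  rewrite (sum_run (b := ~~ be)) // => k hk; apply: fnbe; alia.
have E5 : PS f (b - r).+1 = (PS f p.+1 + ((b - r).+1 - p.+1)%:Z * sg be)%R.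
  rewrite (PS_split _ (_ : p.+1 <= (b - r).+1)); last alia.
  rewrite (sum_run (b := be)) // => k hk; apply: fbe; alia.
have E6 : PS f (b + r.+1) = PS f (b - r).+1 by rewrite -e2 PS_bal.
have G1 : PS g b.+1 = (PS g A.+1 + (b.+1 - A.+1)%:Z * sg be)%R.
  rewrite (PS_split _ (_ : A.+1 <= b.+1)); last alia.
  rewrite (sum_run (b := be)) // => k hk; apply: gconst; alia.
rewrite sg_neg in E2 E4.
have key : p + p' = A + b /\ (PS f p'.+1 - PS f p.+1 = PS g b.+1 - PS g A.+1)%R.
  have sgb : forall c : bool, sg c = 1%R \/ sg c = (-1)%R by case; [left|right].
  move: E1 E2 E3 E4 E5 E6 G1; case: (sgb be) => ->; alia.
case: key => k1 k2; split; first (split => //; alia).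
split.
- move=> nr; rewrite ltnNge; apply/negP => Ap; apply: (nr (A - r)) => k kr.
  rewrite !fp //; alia.
- move=> nr; rewrite leqNgt; apply/negP => bA'; apply: (nr A.+1) => k kr.
  rewrite !gconst //; alia.
Qed.
End Pair.
Lemma PS_S h k : PS h k.+1 = (PS h k + sg (h k))%R.
Proof. by rewrite /PS big_ord_recr. Qed.

Lemma PS_addn n (h : nat -> bool) : periodic n h -> forall k, PS h (k + n) = (PS h k + PS h n)%R.
Proof.
move=> P; elim=> [|k IH]; first by rewrite add0n /PS big_ord0 add0r.
by rewrite addSn !PS_S IH P -!addrA [(PS h n + _)%R]addrC.
Qed.

Lemma PS_mod n (h : nat -> bool) : periodic n h -> forall k,
  PS h k = (PS h (k %% n) + (k %/ n)%:Z * PS h n)%R.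
Proof.
move=> P k; rewrite {1}(divn_eq k n); elim: (k %/ n) => [|q IH]; first by rewrite mul0n add0n mul0r addr0.
rewrite mulSn -addnA addnC PS_addn // IH.
have -> : Posz q.+1 = (Posz q + 1)%R by lia.
by rewrite mulrDl mul1r addrA.
Qed.

Lemma PS_modn n (h : nat -> bool) : periodic n h -> forall k,
  (n%:Z * PS h k = n%:Z * PS h (k %% n) + PS h n * (k%:Z - (k %% n)%:Z))%R.
Proof.
move=> P k; rewrite (PS_mod P k) mulrDr; congr (_ + _)%R.
have -> : (k%:Z - (k %% n)%:Z)%R = Posz ((k %/ n) * n) by rewrite {1}(divn_eq k n); lia.
rewrite PoszM; nia.
Qed.

Lemma reidx n (F : 'I_n -> int) (h1 h2 : 'I_n -> 'I_n) (S T : {set 'I_n}) :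
  {in S &, injective h1} -> {in S &, injective h2} ->
  h1 @: S \subset T -> h2 @: S \subset T -> #|S| = #|T| ->
  (\sum_(a in S) F (h1 a) = \sum_(a in S) F (h2 a))%R.
Proof.
move=> i1 i2 s1 s2 c.
have e1 : h1 @: S = T by apply/eqP; rewrite eqEcard s1 card_in_imset // c leqnn.
have e2 : h2 @: S = T by apply/eqP; rewrite eqEcard s2 card_in_imset // c leqnn.
by rewrite -(big_imset _ i1) -(big_imset _ i2) e1 e2.
Qed.
Section Sum.
Variables (n r : nat) (f g : nat -> bool).
Hypothesis n_gt0 : 0 < n.
Hypothesis rn : r.*2 <= n.
Hypotheses (perf : periodic n f) (perg : periodic n g).
Hypotheses (exf : exists j, bd f j) (exg : exists j, bd g j).
Hypothesis Hfg : forall j, g (j + r) = (r < \sum_(k < r.*2.+1) f (j + k)).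
Hypothesis Hgf : forall j, f (j + r) = (r < \sum_(k < r.*2.+1) g (j + k)).

Definition toI (k : nat) : 'I_n := Ordinal (ltn_pmod k n_gt0).
Definition By := [set a : 'I_n | bd g a].
Definition Bx := [set a : 'I_n | bd f a].
Definition bb (a : nat) := nxt n g (a + n).+1.
Definition pp (a : nat) := nxt n f (a + n - r).
Definition pq (a : nat) := nxt n f (a + n + r.+1).

Lemma bdg_n (a : nat) : bd g a -> bd g (a + n).
Proof. by move=> h; rewrite bd_per. Qed.

Lemma PBa (a : 'I_n) : a \in By ->
  [/\ pp a + pq a = a + n + bb a, (PS f (pq a).+1 - PS f (pp a).+1 = PS g (bb a).+1 - PS g (a + n).+1)%R,
      a + n - r <= pp a, (pp a).+1 + r <= bb a & a + n + r.+1 <= pq a <= bb a + r] /\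
  (NR r f -> pp a < a + n) /\ (NR r g -> bb a <= a + n + r).
Proof.
rewrite inE => ha.
have := @PB n r f g n_gt0 perf perg exf exg Hfg Hgf (a + n) _ (bdg_n ha).
by apply; rewrite (leq_trans rn) // leq_addl.
Qed.

Lemma blk (a1 a2 : 'I_n) c1 c2 : a1 \in By -> a2 \in By ->
  a1 + n < c1 <= bb a1 -> a2 + n < c2 <= bb a2 -> c1 %% n = c2 %% n -> a1 = a2.
Proof.
wlog le12 : a1 a2 c1 c2 / c1 <= c2.
  move=> W h1 h2 i1 i2 e; case: (leqP c1 c2) => l; first exact: (W a1 a2 c1 c2).
  by apply/esym; apply: (W a2 a1 c2 c1) => //; rewrite ltnW.
rewrite !inE => h1 h2 /andP[i1 j1] /andP[i2 j2] e.
have dv : n %| c2 - c1 by rewrite -eqn_mod_dvd // e.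
set k := (c2 - c1) %/ n.
have ck : c2 = c1 + k * n by rewrite divnK // subnKC.
have bA : bd g (a1 + n + k * n) by rewrite (per_mul (bd_per perg)) bdg_n.
have sh : nxt n g (a1 + n + k * n).+1 = bb a1 + k * n by rewrite -addSn nxt_shift.
have bA2 : bd g (a2 + n) := bdg_n h2.
case: (ltngtP (a1 + n + k * n) (a2 + n)) => h.
- have := @nxt_min n n_gt0 g perg exg (a1 + n + k * n).+1 (a2 + n).
  rewrite h bA2 sh /= => /(_ _) //; move: i2 j1 j2; rewrite /bb ck; lia.
- have := @nxt_min n n_gt0 g perg exg (a2 + n).+1 (a1 + n + k * n).
  rewrite h bA /= => /(_ _) //; move: i1 j2; rewrite /bb ck; lia.
- apply: val_inj => /=; move: h (ltn_ord a2); case: k {ck sh bA} => [|k']; first by lia.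
  rewrite mulSn; lia.
Qed.

Lemma toI_val k : val (toI k) = k %% n. Proof. by []. Qed.

Lemma modS_eq k : ((k %% n).+1) %% n = k.+1 %% n.
Proof. by rewrite -addn1 modnDml addn1. Qed.

Lemma pp_in (a : 'I_n) : a \in By -> toI (pp a) \in Bx.
Proof. move=> _; rewrite inE toI_val -per_mod //; [exact: nxt_bd | exact: bd_per]. Qed.

Lemma pq_in (a : 'I_n) : a \in By -> toI (pq a) \in Bx.
Proof. move=> _; rewrite inE toI_val -per_mod //; [exact: nxt_bd | exact: bd_per]. Qed.

Lemma bb_in (a : 'I_n) : a \in By -> toI (bb a) \in By.
Proof. move=> _; rewrite inE toI_val -per_mod //; [exact: nxt_bd | exact: bd_per]. Qed.

Lemma id_in (a : 'I_n) : a \in By -> toI (a + n) \in By.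
Proof. move=> h; rewrite inE toI_val -per_mod; [rewrite inE in h; exact: bdg_n h | exact: bd_per]. Qed.

Lemma pp_inj : {in By &, injective (fun a : 'I_n => toI (pp a))}.
Proof.
move=> a1 a2 h1 h2 /(congr1 val); rewrite !toI_val => e.
have [[_ _ l1 m1 _] _] := PBa h1; have [[_ _ l2 m2 _] _] := PBa h2.
apply: (blk h1 h2 (c1 := pp a1 + r.+1) (c2 := pp a2 + r.+1)).
- apply/andP; split; [move: l1|move: m1]; lia.
- apply/andP; split; [move: l2|move: m2]; lia.
- by rewrite -modnDml e modnDml.
Qed.

Lemma pq_inj : {in By &, injective (fun a : 'I_n => toI (pq a))}.
Proof.
move=> a1 a2 h1 h2 /(congr1 val); rewrite !toI_val => e.
have [[_ _ _ _ /andP[l1 m1]] _] := PBa h1; have [[_ _ _ _ /andP[l2 m2]] _] := PBa h2.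
apply: (blk h1 h2 (c1 := pq a1 - r) (c2 := pq a2 - r)).
- apply/andP; split; [move: l1|move: m1]; lia.
- apply/andP; split; [move: l2|move: m2]; lia.
- apply/eqP; rewrite -(eqn_modDr r) !subnK; first by rewrite e.
  + move: l2; lia.
  + move: l1; lia.
Qed.

Lemma bb_inj : {in By &, injective (fun a : 'I_n => toI (bb a))}.
Proof.
move=> a1 a2 h1 h2 /(congr1 val); rewrite !toI_val => e.
apply: (blk h1 h2 (c1 := bb a1) (c2 := bb a2)) => //.
- by rewrite leqnn andbT; apply: nxt_ge.
- by rewrite leqnn andbT; apply: nxt_ge.
Qed.

Lemma id_inj : {in By &, injective (fun a : 'I_n => toI (a + n))}.
Proof.
move=> a1 a2 _ _ /(congr1 val); rewrite !toI_val !modnDr !modn_small //; exact: val_inj.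
Qed.

Lemma card_le : #|By| <= #|Bx|.
Proof.
rewrite -(card_in_imset pp_inj); apply: subset_leq_card.
by apply/subsetP => x /imsetP[a ha ->]; apply: pp_in.
Qed.

Lemma imsub (h : 'I_n -> 'I_n) (S T : {set 'I_n}) : (forall a, a \in S -> h a \in T) -> h @: S \subset T.
Proof. by move=> H; apply/subsetP => x /imsetP[a ha ->]; apply: H. Qed.

Lemma Lmod h (u v : nat) : periodic n h ->
  (n%:Z * (PS h u.+1 - PS h v.+1) = (n%:Z * PS h (u.+1 %% n)%N - n%:Z * PS h (v.+1 %% n)%N)
     + PS h n * ((u%:Z - v%:Z) - ((u.+1 %% n)%N%:Z - (v.+1 %% n)%N%:Z)))%R.
Proof.
move=> P; rewrite mulrBr (PS_modn P u.+1) (PS_modn P v.+1).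
have -> : Posz u.+1 = (Posz u + 1)%R by lia.
have -> : Posz v.+1 = (Posz v + 1)%R by lia.
ring.
Qed.

Section Rel.
Hypothesis cardE : #|By| = #|Bx|.

Lemma RX (F : nat -> int) :
  (\sum_(a in By) F ((pq a).+1 %% n)%N = \sum_(a in By) F ((pp a).+1 %% n)%N)%R.
Proof.
have e : forall k, F (k.+1 %% n)%N = F ((toI k).+1 %% n)%N by move=> k; rewrite toI_val modS_eq.
rewrite (eq_bigr (fun a : 'I_n => F ((toI (pq a)).+1 %% n)%N)) => [|a _]; last by rewrite e.
rewrite [RHS](eq_bigr (fun a : 'I_n => F ((toI (pp a)).+1 %% n)%N)) => [|a _]; last by rewrite e.
apply: (@reidx n (fun q : 'I_n => F (q.+1 %% n)%N) _ _ By Bx pq_inj pp_inj _ _ cardE); apply: imsub;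
  [exact: pq_in | exact: pp_in].
Qed.

Lemma RY (F : nat -> int) :
  (\sum_(a in By) F ((bb a).+1 %% n)%N = \sum_(a in By) F ((a + n).+1 %% n)%N)%R.
Proof.
have e : forall k, F (k.+1 %% n)%N = F ((toI k).+1 %% n)%N by move=> k; rewrite toI_val modS_eq.
rewrite (eq_bigr (fun a : 'I_n => F ((toI (bb a)).+1 %% n)%N)) => [|a _]; last by rewrite e.
rewrite [RHS](eq_bigr (fun a : 'I_n => F ((toI (a + n)).+1 %% n)%N)) => [|a _]; last by rewrite e.
apply: (@reidx n (fun q : 'I_n => F (q.+1 %% n)%N) _ _ By By bb_inj id_inj _ _ (erefl _)); apply: imsub;
  [exact: bb_in | exact: id_in].
Qed.

Lemma rel :
  (PS f n * (\sum_(a in By) ((pq a)%:Z - (pp a)%:Z)) =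
   PS g n * (\sum_(a in By) ((bb a)%:Z - (a + n)%:Z)))%R.
Proof.
have S1 : (\sum_(a in By) (PS f (pq a).+1 - PS f (pp a).+1) =
           \sum_(a in By) (PS g (bb a).+1 - PS g (a + n).+1))%R.
  by apply: eq_bigr => a ha; case: (PBa ha) => [[_ e _ _ _] _].
have R1 : (n%:Z * \sum_(a in By) (PS f (pq a).+1 - PS f (pp a).+1) =
           PS f n * (\sum_(a in By) ((pq a)%:Z - (pp a)%:Z)))%R.
  rewrite mulr_sumr; under eq_bigr => a _ do rewrite (Lmod _ _ perf).
  rewrite big_split /= sumrB (RX (fun k => n%:Z * PS f k)%R) subrr add0r -mulr_sumr.
  congr (_ * _)%R; rewrite sumrB [X in (_ - X)%R]sumrB (RX (fun k => Posz k)) subrr subr0.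
  by rewrite sumrB.
have R2 : (n%:Z * \sum_(a in By) (PS g (bb a).+1 - PS g (a + n).+1) =
           PS g n * (\sum_(a in By) ((bb a)%:Z - (a + n)%:Z)))%R.
  rewrite mulr_sumr; under eq_bigr => a _ do rewrite (Lmod _ _ perg).
  rewrite big_split /= sumrB (RY (fun k => n%:Z * PS g k)%R) subrr add0r -mulr_sumr.
  congr (_ * _)%R; rewrite sumrB [X in (_ - X)%R]sumrB (RY (fun k => Posz k)) subrr subr0.
  by rewrite sumrB.
by rewrite -R1 -R2 S1.
Qed.
End Rel.

Lemma WgtV : (NR r f \/ NR r g) -> By != set0 ->
  (\sum_(a in By) ((bb a)%:Z - (a + n)%:Z) < \sum_(a in By) ((pq a)%:Z - (pp a)%:Z))%R.
Proof.
move=> nr ne; rewrite -subr_gt0 -sumrB.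
have H2 : (0 < \sum_(a in By) 2%:Z)%R.
  rewrite sumr_const; case/set0Pn: ne => a ha.
  have : 0 < #|By| by apply/card_gt0P; exists a.
  case: #|By| => // k _; rewrite mulrS; lia.
have H1 : (\sum_(a in By) 2%:Z <= \sum_(a in By) ((pq a)%:Z - (pp a)%:Z - ((bb a)%:Z - (a + n)%:Z)))%R.
  apply: ler_sum => a ha; case: (PBa ha) => [[e _ _ m1 _] [n1 n2]].
  case: nr => [/n1|/n2] h; lia.
exact: (Order.POrderTheory.lt_le_trans H2 H1).
Qed.

Lemma Vge0 : (0 <= \sum_(a in By) ((bb a)%:Z - (a + n)%:Z))%R.
Proof.
apply: sumr_ge0 => a ha; have : a + n < bb a := nxt_ge _ _ _; lia.
Qed.
End Sum.

Lemma fin_arith (X Y w1 v1 w2 v2 : int) : (X * w1 = Y * v1)%R -> (Y * w2 = X * v2)%R ->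
  (v1 < w1)%R -> (v2 < w2)%R -> (0 <= v1)%R -> (0 <= v2)%R -> X = 0%R.
Proof.
move=> e1 e2 l1 l2 p1 p2.
have E : (X * (w1 * w2) = X * (v1 * v2))%R.
  by rewrite mulrA e1 -mulrA mulrCA e2 mulrCA.
have : (X * (w1 * w2 - v1 * v2) = 0)%R by rewrite mulrBr E subrr.
move/eqP; rewrite GRing.mulf_eq0 => /orP[/eqP //|/eqP E2]; exfalso; nia.
Qed.

Lemma core_final n r (x y : nat -> bool) : 0 < n -> r.*2 <= n -> periodic n x -> periodic n y ->
  (forall j, y (j + r) = (r < \sum_(k < r.*2.+1) x (j + k))) ->
  (forall j, x (j + r) = (r < \sum_(k < r.*2.+1) y (j + k))) ->
  NR r x -> PS x n = 0%R.
Proof.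
move=> n0 rn px py Hxy Hyx nrx.
have exx : exists j, bd x j.
  case: (boolP [forall k : 'I_r.+1, x (0 + k) == x 0]) => [/forallP H|].
    exfalso; apply: (nrx 0) => k kr; apply/eqP; exact: (H (Ordinal (kr : k < r.+1))).
  move=> /forallPn [k]; rewrite add0n eq_sym => ne.
  by have [j _ bj] := bd_exists (leq0n k) ne; exists j.
have exy : exists j, bd y j.
  case: exx => p bp.
  have bp' : bd x (p + n - r + r) by rewrite subnK ?bd_per //; lia.
  have [e1 e2 _] := BL Hyx bp'.
  have ne : y (p + n - r) != y (p + n - r + r.*2.+1) by rewrite e1 e2; exact: bp'.
  by have [j _ bj] := bd_exists (leq_addr _ _) ne; exists j.
have c1 := @card_le n r x y n0 rn px py exx exy Hxy Hyx.
have c2 := @card_le n r y x n0 rn py px exy exx Hyx Hxy.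
have cE : #|By n y| = #|Bx n x| by apply/eqP; rewrite eqn_leq c1.
have cE' : #|By n x| = #|Bx n y| by [].
have R1 := @rel n r x y n0 rn px py exx exy Hxy Hyx cE.
have R2 := @rel n r y x n0 rn py px exy exx Hyx Hxy cE'.
have ne1 : By n y != set0.
  case: exy => j bj; apply/set0Pn; exists (toI n0 j); rewrite inE toI_val -per_mod //; exact: bd_per.
have ne2 : By n x != set0.
  case: exx => j bj; apply/set0Pn; exists (toI n0 j); rewrite inE toI_val -per_mod //; exact: bd_per.
have W1 := @WgtV n r x y n0 rn px py exx exy Hxy Hyx (or_introl nrx) ne1.
have W2 := @WgtV n r y x n0 rn py px exy exx Hyx Hxy (or_intror nrx) ne2.
have V1 := @Vge0 n r y n0 rn.
have V2 := @Vge0 n r x n0 rn.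
exact: (fin_arith R1 R2 W1 W2 V1 V2).
Qed.

Lemma count_iota_sum (h : nat -> bool) m : count h (iota 0 m) = \sum_(k < m) h k.
Proof.
elim: m => [|m IH]; first by rewrite big_ord0.
have -> : iota 0 m.+1 = iota 0 m ++ [:: m] by rewrite -addn1 iotaD.
by rewrite count_cat IH big_ord_recr /= addn0.
Qed.

Lemma sum_neg (h : nat -> bool) m : \sum_(k < m) h k + \sum_(k < m) ~~ h k = m.
Proof.
rewrite -big_split /= (eq_bigr (fun _ => 1)) => [|k _]; last by case: (h k).
by rewrite sum1_card card_ord.
Qed.

Lemma mod_hit n base t : 0 < n -> exists2 e, e < n & (base + e) %% n = t %% n.
Proof.
move=> n0; exists ((t + base * n - base) %% n); first exact: ltn_pmod.
have hb : base <= t + base * n by rewrite (leq_trans _ (leq_addl _ _)) // leq_pmulr.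
by rewrite modnDmr subnKC // addnC modnMDl.
Qed.

Lemma mod_hit_left n J t : 0 < n -> n <= J -> exists2 d, d < n & (J - d.+1) %% n = t %% n.
Proof.
move=> n0 nJ; have [d dn e] := mod_hit t J.-1 n0; exists d => //.
apply/eqP; rewrite -(eqn_modDr d).
have -> : J - d.+1 + d = J.-1 by lia.
by rewrite e.
Qed.

Section Glue.
Variables (r n : nat) (s : 'Z_n -> bool).
Hypothesis n1 : 1 < n.

Definition xs (t : 'Z_n -> bool) (j : nat) : bool := t (j%:R)%R.

Lemma xs_per t : periodic n (xs t).
Proof. by move=> i; rewrite /xs natrD pchar_Zp // addr0. Qed.

Lemma count_window (p : 'Z_n -> bool) j :
  count p (window r ((j + r)%:R)%R) = \sum_(k < r.*2.+1) p ((j + k)%:R)%R.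
Proof.
rewrite /window count_map count_iota_sum; apply: eq_bigr => k _.
by rewrite /= natrD addrK natrD.
Qed.

Lemma maj_nat (t : 'Z_n -> bool) j :
  maj r t ((j + r)%:R)%R = (r < \sum_(k < r.*2.+1) xs t (j + k)).
Proof.
rewrite /maj /ones_in /zeros_in !count_window.
have := sum_neg (fun k => t ((j + k)%:R)%R) r.*2.+1.
rewrite /xs; move: (\sum_(k < _) t _) (\sum_(k < _) ~~ t _) => o z e.
case: ltnP => h1; case: ltnP => h2 //=; exfalso; lia.
Qed.
End Glue.

Lemma NRx (r n : nat) (s : 'Z_n -> bool) : 1 < n -> r.*2 < n ->
  (forall i L b, max_hom_block s i L b -> L <= r) -> NR r (xs s).
Proof.
move=> n1 rn hb.
have px : periodic n (xs s) by apply: xs_per.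
have n0 : 0 < n by lia.
have m1 : ((n.-1)%:R : 'Z_n)%R = (-1)%R.
  by rewrite -[LHS](addrK 1%R) natr1 prednK // pchar_Zp // sub0r.
have MHB : forall i L b, 0 < L -> L <= n -> (forall k, k < L -> (xs s) (i + k) = b) ->
    ((xs s) (i + n.-1) = ~~ b /\ (xs s) (i + L) = ~~ b) -> L <= r.
  move=> i L b L0 Ln Hk [h1 h2]; apply: (hb (i%:R)%R L b); split => //.
  - by move=> k kL; rewrite -natrD; exact: Hk.
  - by right; split; [rewrite -m1 -natrD; exact: h1 | rewrite -natrD; exact: h2].
move=> j H.
set b := (xs s) j.
case: (boolP [forall t : 'I_n, (xs s) t == b]) => [/forallP all|].
  have : n <= r.
    apply: (hb 0%R n b); split => //; last by left.
    move=> k kn; rewrite add0r; apply/eqP; exact: (all (Ordinal kn)).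
  lia.
move=> /forallPn [t /eqP tb].
have [d1 d1n e1] := mod_hit_left t n0 (leq_addl j n : n <= j + n).
have p1 : (xs s) (j + n - d1.+1) != b by rewrite (per_mod px) e1 -per_mod //; apply/eqP.
have P1 : exists d, (xs s) (j + n - d.+1) != b by exists d1.
have [e2 e2n e2e] := mod_hit (j + r.+1) t n0.
have p2 : (xs s) (j + r.+1 + e2) != b by rewrite (per_mod px) e2e -per_mod //; apply/eqP.
have P2 : exists e, (xs s) (j + r.+1 + e) != b by exists e2.
have [d0 hd0 mind0] := ex_minnP P1.
have [e0 he0 mine0] := ex_minnP P2.
have d0n : d0 < n := leq_ltn_trans (mind0 d1 p1) d1n.
have leftb : forall d, d < d0 -> (xs s) (j + n - d.+1) = b.
  move=> d dd; have [//|ne] := eqVneq ((xs s) (j + n - d.+1)) b; have := mind0 _ ne; lia.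
have rightb : forall e, e < e0 -> (xs s) (j + r.+1 + e) = b.
  move=> e ee; have [//|ne] := eqVneq ((xs s) (j + r.+1 + e)) b; have := mine0 _ ne; lia.
have midb : forall k, k <= r -> (xs s) (j + k) = b := fun k hk => H k hk.
set L := d0 + r.+1 + e0.
have LN : L <= n.
  rewrite leqNgt; apply/negP => Ln.
  have em : j + n - d0.+1 = j + (n - d0.+1) by lia.
  move: hd0; rewrite em.
  case: (leqP (n - d0.+1) r) => mr; first by rewrite midb ?eqxx.
  have -> : j + (n - d0.+1) = j + r.+1 + (n - d0.+1 - r.+1) by lia.
  rewrite rightb ?eqxx //; rewrite /L in Ln; lia.
have L0 : 0 < L by rewrite /L; lia.
have Hk : forall k, k < L -> (xs s) (j + n - d0 + k) = b.
  move=> k kL; case: (ltnP k d0) => k1.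
    have -> : j + n - d0 + k = j + n - (d0 - k - 1).+1 by lia.
    apply: leftb; lia.
  case: (leqP k (d0 + r)) => k2.
    have -> : j + n - d0 + k = (j + (k - d0)) + n by lia.
    rewrite px; apply: midb; lia.
  have -> : j + n - d0 + k = (j + r.+1 + (k - d0 - r.+1)) + n by lia.
  rewrite px; apply: rightb; rewrite /L in kL; lia.
have Hb : (xs s) (j + n - d0 + n.-1) = ~~ b /\ (xs s) (j + n - d0 + L) = ~~ b.
  split.
    have -> : j + n - d0 + n.-1 = (j + n - d0.+1) + n by lia.
    by rewrite px; apply: bool_ne.
  have -> : j + n - d0 + L = (j + r.+1 + e0) + n by rewrite /L; lia.
  by rewrite px; apply: bool_ne.
have := MHB _ _ _ L0 LN Hk Hb; rewrite /L; lia.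
Qed.

Lemma card_Zsum (n : nat) (p : 'Z_n -> bool) : 1 < n ->
  #|[pred i | p i]| = \sum_(j < n) p (j%:R)%R.
Proof.
move=> n1; rewrite -sum1_card big_mkcond /=.
rewrite (eq_bigr (fun i : 'Z_n => (p ((val i)%:R)%R : nat))) => [|i _]; last first.
  by rewrite natr_Zp inE; case: (p i).
rewrite -(big_mkord xpredT (fun j => (p (j%:R)%R : nat))) Zp_cast //.
by rewrite big_mkord.
Qed.

Theorem claim21 (r n : nat) (s : 'Z_n -> bool) :
  (1 <= r)%N -> (r.*2 < n)%N ->
  temporally_periodic r s ->
  (forall (i : 'Z_n) (L : nat) (b : bool), max_hom_block s i L b -> (L <= r)%N) ->
  balanced s.
Proof.
move=> r1 rn tp hb.
have n1 : 1 < n by lia.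
have n0 : 0 < n by lia.
have rn' : r.*2 <= n by lia.
have px : periodic n (xs s) by apply: xs_per.
have py : periodic n (xs (maj r s)) by apply: xs_per.
have Hxy : forall j, xs (maj r s) (j + r) = (r < \sum_(k < r.*2.+1) xs s (j + k)).
  by move=> j; rewrite /xs maj_nat.
have Hyx : forall j, xs s (j + r) = (r < \sum_(k < r.*2.+1) xs (maj r s) (j + k)).
  by move=> j; rewrite {1}/xs -(tp ((j + r)%:R)%R) maj_nat.
have nr : NR r (xs s) by apply: NRx.
have X0 := @core_final n r (xs s) (xs (maj r s)) n0 rn' px py Hxy Hyx nr.
rewrite /balanced (card_Zsum _ n1) (card_Zsum s n1) /=.
have e1 := sum_neg (xs s) n.
move: X0; rewrite /PS -(big_mkord xpredT (fun j => sg (xs s j))).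
have := sum_sg_nat (xs s) 0 n; rewrite add0n => ->.
rewrite /xs in e1 *.
have -> : \sum_(k < n) s ((0 + k)%:R)%R = \sum_(k < n) s (k%:R)%R.
  by apply: eq_bigr => k _; rewrite add0n.
move: e1; set A := \sum_(k < n) s (k%:R)%R; set B := \sum_(k < n) ~~ s (k%:R)%R.
lia.
Qed.
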